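(* For all natural numbers $n\geq 1$, \[a_3(n)=3p(n)-p(n+1)-2p(n+2)+p(n+3).\]
   Context: $p(n)$ denotes the number of partitions of $n$. $a_3(n)$ denotes the number of partitions of $n$ in which the smallest part occurs at least $3$ times. *)

(* Defs.v *)
From mathcomp Require Import all_boot all_order all_algebra.
Set Implicit Arguments. Unset Strict Implicit. Unset Printing Implicit Defensive.

Definition is_partition (n : nat) (s : seq nat) : bool :=
  all (fun x => 0 < x) s && sorted geq s && (sumn s == n).

Fixpoint bseqs (k m : nat) : seq (seq nat) :=
  match k with
  | 0 => [:: [::]]
  | k'.+1 => flatten [seq [seq i :: s | s <- bseqs k' m] | i <- iota 1 m]
  end.

(* every partition of n has at most n parts, each at most n *)
Definition candidates (n : nat) : seq (seq nat) :=
  flatten [seq bseqs k n | k <- iota 0 n.+1].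

Definition partitions (n : nat) : seq (seq nat) :=
  undup [seq s <- candidates n | is_partition n s].

Definition p (n : nat) : nat := size (partitions n).

Definition smallest_part (s : seq nat) : nat := foldr minn (head 0 s) s.

Definition a3 (n : nat) : nat :=
  count (fun s => 3 <= count_mem (smallest_part s) s) (partitions n).

(* Main.v *)
Require Import Defs.
From mathcomp Require Import all_boot all_order all_algebra.
Import GRing.Theory Num.Theory.
Set Implicit Arguments. Unset Strict Implicit.

Lemma mem_bseqs k m s : (s \in bseqs k m) = (size s == k) && all (fun x => 0 < x <= m) s.
Proof.
elim: k s => [|k IH] s /=; first by case: s.
apply/allpairsP/idP.
- move=> [[i t] /= [+ + ->]]; rewrite mem_iota IH => /andP[i1 i2] /andP[/eqP <- ht].
  by rewrite /= eqxx ht i1 /=; rewrite addnC addn1 ltnS in i2; rewrite i2.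
- case: s => [|i t] //= /andP[hs /andP[/andP[i1 i2] ht]].
  exists (i, t) => /=; split => //; first by rewrite mem_iota i1 addnC addn1 ltnS.
  by rewrite IH ht andbT -eqSS.
Qed.

Lemma size_le_sumn s : all (fun x => 0 < x) s -> size s <= sumn s.
Proof. elim: s => //= x s IH /andP[h1 h2]; rewrite -add1n leq_add //; exact: IH. Qed.

Lemma le_sumn s x : x \in s -> x <= sumn s.
Proof.
elim: s => //= y s IH; rewrite in_cons => /orP[/eqP->|h]; first exact: leq_addr.
by rewrite (leq_trans (IH h)) // leq_addl.
Qed.

Lemma mem_partitions n s : (s \in partitions n) = is_partition n s.
Proof.
rewrite /partitions mem_undup mem_filter.
case h: (is_partition n s) => //=.
move: h; rewrite /is_partition => /andP[/andP[hpos hsort] /eqP hsum].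
apply/flatten_mapP; exists (size s).
  by by rewrite mem_iota add0n ltnS -hsum size_le_sumn.
rewrite mem_bseqs eqxx /=; apply/allP => x hx.
by move/allP: hpos => /(_ x hx) ->; rewrite -hsum le_sumn.
Qed.

Definition isp m (y : seq nat) := all (fun x => 0 < x) y && sorted leq y && (sumn y == m).
Definition Ln m := map (@rev nat) (partitions m).

Lemma uniq_Ln m : uniq (Ln m).
Proof. rewrite map_inj_uniq ?undup_uniq //; exact: (can_inj (@revK nat)). Qed.

Lemma mem_Ln m y : (y \in Ln m) = isp m y.
Proof.
rewrite -{1}(revK y) /Ln (mem_map (can_inj (@revK nat))) mem_partitions /is_partition /isp.
by rewrite all_rev rev_sorted sumn_rev.
Qed.

Lemma count_bij (l1 l2 : seq (seq nat)) (f : seq nat -> seq nat) (a b : pred (seq nat)) :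
  uniq l1 -> uniq l2 -> injective f ->
  (forall z, z \in l1 -> a z -> (f z \in l2) && b (f z)) ->
  (forall y, y \in l2 -> b y -> exists2 z, (z \in l1) && a z & y = f z) ->
  count b l2 = count a l1.
Proof.
move=> u1 u2 inj H1 H2.
rewrite -!size_filter -(size_map f (filter a l1)).
apply: perm_size; apply: uniq_perm.
- exact: filter_uniq.
- rewrite map_inj_uniq //; exact: filter_uniq.
- move=> y; rewrite mem_filter; apply/idP/idP.
  + move=> /andP[hb hy]; have [z hz ->] := H2 y hy hb.
    by rewrite map_f // mem_filter andbC.
  + move=> /mapP[z]; rewrite mem_filter => /andP[ha hz] ->.
    by have /andP[-> ->] := H1 z hz ha.
Qed.

Lemma head_min h t s : sorted leq (h :: t) -> all (leq s) (h :: t) -> s \in h :: t -> h = s.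
Proof.
rewrite /= (path_sortedE leq_trans) => /andP[ht _] /andP[sh _].
rewrite in_cons => /orP[/eqP->//|hs].
by apply/eqP; rewrite eqn_leq sh andbT (allP ht s hs).
Qed.

Lemma split_nseq k s y : sorted leq y -> all (leq s) y -> k <= count_mem s y ->
  y = nseq k s ++ drop k y.
Proof.
elim: k y => [|k IH] y hs ha hc; first by rewrite drop0.
case: y hs ha hc => [|h t] hs ha hc; first by [].
have hh : h = s.
  by apply: head_min hs ha _; rewrite -has_pred1 has_count (leq_trans _ hc).
subst h; rewrite /=; congr (_ :: _); apply: IH.
- exact: path_sorted hs.
- by case/andP: ha.
- by move: hc; rewrite /= eqxx add1n ltnS.
Qed.

Lemma sorted_nseq_cat k s z : all (leq s) z -> sorted leq z -> sorted leq (nseq k s ++ z).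
Proof.
move=> ha hs; elim: k => [|k IH] //=.
rewrite (path_sortedE leq_trans) IH andbT all_cat ha andbT.
by apply/allP => x /nseqP[-> _].
Qed.

Lemma count_nseq_bij k s m : 0 < s -> k * s <= m ->
  count (fun y => all (leq s) y && (k <= count_mem s y)) (Ln m) =
  count (all (leq s)) (Ln (m - k * s)).
Proof.
move=> s0 hm.
apply: (@count_bij _ _ (fun z => nseq k s ++ z)) (uniq_Ln _) (uniq_Ln _) _ _ _.
- by move=> z1 z2 /= /eqP; rewrite eqseq_cat // => /andP[_ /eqP].
- move=> z; rewrite !mem_Ln /isp => /andP[/andP[hp hs] /eqP hz] ha.
  rewrite !all_cat hp ha (@sorted_nseq_cat k s z ha hs) sumn_cat sumn_nseq hz count_cat count_nseq /=.
  rewrite eqxx mul1n leq_addr !andbT mulnC subnKC // eqxx /=.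
  by rewrite andbT; apply/andP; split; apply/allP => x /nseqP[-> _].
- move=> y; rewrite mem_Ln /isp => /andP[/andP[hp hs] /eqP hy] /andP[ha hc].
  have e := split_nseq hs ha hc.
  exists (drop k y); last exact: e.
  move: (drop k y) e => z e; subst y.
  rewrite mem_Ln /isp (cat_sorted2 hs).2.
  move: hp ha hy; rewrite !all_cat sumn_cat sumn_nseq => /andP[_ ->] /andP[_ ->] <-.
  by rewrite mulnC addKn eqxx.
Qed.

Lemma count_nseq_zero k s m : m < k * s ->
  count (fun y => all (leq s) y && (k <= count_mem s y)) (Ln m) = 0.
Proof.
move=> hm; apply/eqP; rewrite -leqn0 leqNgt -has_count; apply/hasPn => y.
rewrite mem_Ln /isp => /andP[/andP[_ hs] /eqP hy]; apply/negP => /andP[ha hc].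
move: (split_nseq hs ha hc) hy => ->; rewrite sumn_cat sumn_nseq => hy.
by move: hm; rewrite -hy mulnC ltnNge leq_addr.
Qed.

Lemma count_split (T : Type) (a b : pred T) l :
  count a l = count (predI a b) l + count (predI a (predC b)) l.
Proof.
elim: l => //= x l ->; case: (a x); case: (b x) => /=; rewrite ?add0n ?add1n ?addnS ?addSn //.
Qed.

Lemma all_S s y : all (leq s.+1) y = all (leq s) y && ~~ (1 <= count_mem s y).
Proof.
elim: y => //= x y ->.
by case: (ltngtP s x) => _ //=; rewrite ?andbA ?add0n ?add1n ?andbF.
Qed.

Definition cN m s := count (all (leq s)) (Ln m).

Lemma cN_rec m s : 0 < s -> cN m s = cN m s.+1 + (if s <= m then cN (m - s) s else 0).
Proof.
move=> s0; rewrite /cN (count_split _ (all (leq s.+1))); congr (_ + _).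
- by apply: eq_count => y /=; rewrite all_S andbA andbb.
- transitivity (count (fun y => all (leq s) y && (1 <= count_mem s y)) (Ln m)).
    by apply: eq_count => y /=; rewrite all_S negb_and negbK; case: (all (leq s) y).
  case: leqP => h; first by rewrite -[s in m - s]mul1n count_nseq_bij ?mul1n.
  by rewrite count_nseq_zero ?mul1n.
Qed.

Definition Q3 (y : seq nat) := if y is h :: _ then 3 <= count_mem h y else false.
Definition a3' m s := count (fun y => all (leq s) y && Q3 y) (Ln m).

Lemma a3'_rec m s : 0 < s ->
  a3' m s = a3' m s.+1 + (if 3 * s <= m then cN (m - 3 * s) s else 0).
Proof.
move=> s0; rewrite /a3' (count_split _ (all (leq s.+1))); congr (_ + _).
- apply: eq_count => y /=; rewrite all_S.
  by case: (all (leq s) y); case: (Q3 y); case: (1 <= count_mem s y).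
- transitivity (count (fun y => all (leq s) y && (3 <= count_mem s y)) (Ln m)).
    apply: eq_in_count => y; rewrite mem_Ln /isp => /andP[/andP[_ hs] _] /=.
    rewrite all_S negb_and negbK.
    case ha: (all (leq s) y) => //=.
    case: y ha hs => [|h t] ha hs //=.
    case hc: (0 < count_mem s (h :: t)).
      have hh : h = s by apply: head_min hs ha _; rewrite -has_pred1 has_count.
      by subst h; rewrite andbT.
    move: hc; rewrite lt0n => /negbFE /eqP hc; rewrite andbF.
    by move: hc => /= ->.
  case: leqP => h; first by rewrite count_nseq_bij.
  by rewrite count_nseq_zero.
Qed.
From mathcomp Require Import zify ring.
Local Open Scope ring_scope.

Definition cz (M : int) (s : nat) : int :=
  match M with Posz m => (cN m s)%:Z | Negz _ => 0 end.

Lemma czN M s : M < 0 -> cz M s = 0.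
Proof. by case: M. Qed.

Lemma cz_rec s M : (0 < s)%N -> cz M s.+1 = cz M s - cz (M - s%:Z) s.
Proof.
move=> s0; case: M => [m|m].
- rewrite /= (cN_rec m s0); case: leqP => h.
  + by rewrite (subzn h) /= PoszD addrK.
  + by rewrite czN ?addn0 ?subr0 //; lia.
- by rewrite /= czN ?subr0 //; lia.
Qed.

Definition tt (N : int) (s : nat) : int :=
  cz (N - 3) s - cz (N - 2) s - cz (N - 1) s + cz N s + cz (N - s%:Z - 2) s
  - cz (N - s%:Z) s + cz (N - 2 * s%:Z - 1) s.

Lemma tt_step N s : (0 < s)%N -> tt N s - tt N s.+1 = cz (N - 3 - 3 * s%:Z) s.
Proof.
move=> s0; rewrite /tt !(cz_rec _ s0).
have e1 : N - (s.+1)%:Z - 2 - s%:Z = N - 2 * s%:Z - 3 by lia.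
have e2 : N - (s.+1)%:Z - 2 = N - 3 - s%:Z by lia.
have e3 : N - (s.+1)%:Z - s%:Z = N - 2 * s%:Z - 1 by lia.
have e4 : N - (s.+1)%:Z = N - 1 - s%:Z by lia.
have e5 : N - 2 * (s.+1)%:Z - 1 - s%:Z = N - 3 - 3 * s%:Z by lia.
have e6 : N - 2 * (s.+1)%:Z - 1 = N - 2 * s%:Z - 3 by lia.
have e7 : N - 2 - s%:Z = N - s%:Z - 2 by lia.
rewrite e1 e2 e3 e4 e5 e6 e7; ring.
Qed.

Lemma cz_sub m t s : cz (m%:Z - t%:Z) s = if (t <= m)%N then (cN (m - t) s)%:Z else 0.
Proof.
case: leqP => h; first by rewrite (subzn h).
by rewrite czN //; lia.
Qed.

Lemma tt_iter N k : tt N 1 = \sum_(1 <= i < k.+1) cz (N - 3 - 3 * i%:Z) i + tt N k.+1.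
Proof.
elim: k => [|k IH]; first by rewrite big_geq // add0r.
rewrite IH (big_nat_recr k.+1) //= -(tt_step N (ltn0Sn k)); ring.
Qed.

Lemma a3_iter m k : (a3' m 1)%:Z = \sum_(1 <= i < k.+1) cz (m%:Z - 3 * i%:Z) i + (a3' m k.+1)%:Z.
Proof.
elim: k => [|k IH]; first by rewrite big_geq // add0r.
rewrite IH (big_nat_recr k.+1) //= -addrA; congr (_ + _).
rewrite (a3'_rec m (ltn0Sn k)) PoszD addrC; congr (_ + _).
have -> : 3 * (k.+1)%:Z = (3 * k.+1)%N%:Z by rewrite PoszM.
by rewrite cz_sub; case: ifP.
Qed.

Lemma all_big m s y : y \in Ln m -> (0 < m)%N -> (m < s)%N -> all (leq s) y = false.
Proof.
rewrite mem_Ln /isp => /andP[_ /eqP hy] m0 ms.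
case: y hy => [|h t] /= hy; first by move: m0; rewrite -hy.
apply/negP => /andP[hs _]; move: ms; rewrite -hy ltnNge.
by rewrite (leq_trans hs (leq_addr _ _)).
Qed.

Lemma cN_big m s : (0 < m)%N -> (m < s)%N -> cN m s = 0%N.
Proof.
move=> m0 ms; apply/eqP; rewrite -leqn0 leqNgt -has_count; apply/hasPn => y hy /=.
by rewrite (all_big hy m0 ms).
Qed.

Lemma a3'_big m s : (0 < m)%N -> (m < s)%N -> a3' m s = 0%N.
Proof.
move=> m0 ms; apply/eqP; rewrite -leqn0 leqNgt -has_count; apply/hasPn => y hy /=.
by rewrite (all_big hy m0 ms).
Qed.

Lemma p_cN m : p m = cN m 1.
Proof.
rewrite /p /cN -(size_map (@rev nat)) -/(Ln m) -count_predT.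
apply: eq_in_count => y; rewrite mem_Ln /isp => /andP[/andP[h _] _]; exact: esym.
Qed.

Lemma foldr_minn_min a l h : h \in l -> all (leq h) l -> (h <= a)%N -> foldr minn a l = h.
Proof.
have ge : forall l, all (leq h) l -> (h <= a)%N -> (h <= foldr minn a l)%N.
  by elim=> //= x l' IH /andP[hx hl] ha; rewrite leq_min hx IH.
elim: l => //= x l IH; rewrite in_cons => /orP[/eqP <-|hl] /andP[hx ha] hha.
  by apply/minn_idPl; apply: ge.
by rewrite IH //; apply/minn_idPr.
Qed.

Lemma a3_a3' n : a3 n = a3' n 1.
Proof.
rewrite /a3 /a3' /Ln count_map; apply: eq_in_count => x; rewrite mem_partitions.
rewrite /is_partition => /andP[/andP[hpos hs] _] /=.
rewrite all_rev hpos /=.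
case e: (rev x) => [|h t].
  by have -> : x = [::] by rewrite -(revK x) e.
have ex : x = rev (h :: t) by rewrite -e revK.
have hs' : sorted leq (h :: t) by rewrite -e rev_sorted.
have ha : all (leq h) (h :: t).
  by move: hs'; rewrite /= (path_sortedE leq_trans) leqnn => /andP[-> _].
have -> : smallest_part x = h.
  rewrite /smallest_part; apply: foldr_minn_min.
  - by rewrite ex mem_rev mem_head.
  - by rewrite ex all_rev.
  - apply: (allP ha); rewrite -mem_rev -ex.
    by move: e; case: (x) => [|y z] //= _; rewrite mem_head.
by rewrite -count_rev e.
Qed.

Theorem theorem1p4 (n : nat) : (1 <= n)%N ->
  (a3 n)%:Z = 3 * (p n)%:Z - (p n.+1)%:Z - 2 * (p n.+2)%:Z + (p n.+3)%:Z.
Proof.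
move=> n1.
have A := a3_iter n (n + 3).
have z : a3' n (n+3).+1 = 0%N by apply: a3'_big; lia.
rewrite z addr0 -a3_a3' in A.
have B := tt_iter (n%:Z + 3) (n + 3).
have T0 : tt (n%:Z + 3) (n + 3).+1 = 0.
  rewrite /tt.
  have e1 : n%:Z + 3 - 3 = n%:Z by lia.
  have e2 : n%:Z + 3 - 2 = (n.+1)%:Z by lia.
  have e3 : n%:Z + 3 - 1 = (n.+2)%:Z by lia.
  have e4 : n%:Z + 3 = (n.+3)%:Z by lia.
  have e5 : n%:Z + 3 - ((n + 3).+1)%:Z - 2 = -3 by lia.
  have e6 : n%:Z + 3 - ((n + 3).+1)%:Z = -1 by lia.
  rewrite e1 e2 e3 e5 e6 (@czN (n%:Z + 3 - 2 * ((n + 3).+1)%:Z - 1)); last by lia.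
  rewrite e4 /= !cN_big //; try lia.
have B' : tt (n%:Z + 3) 1 = \sum_(1 <= i < (n + 3).+1) cz (n%:Z - 3 * i%:Z) i.
  by rewrite B T0 addr0; apply: eq_bigr => i _; rewrite addrK.
rewrite A -B' /tt.
have e1 : n%:Z + 3 - 3 = n%:Z by lia.
have e2 : n%:Z + 3 - 2 = (n.+1)%:Z by lia.
have e3 : n%:Z + 3 - 1 = (n.+2)%:Z by lia.
have e5 : n%:Z + 3 - 1%:Z - 2 = n%:Z by lia.
have e6 : n%:Z + 3 - 1%:Z = (n.+2)%:Z by lia.
have e7 : n%:Z + 3 - 2 * 1%:Z - 1 = n%:Z by lia.
have e4 : n%:Z + 3 = (n.+3)%:Z by lia.
have e8 : (n.+2)%:Z - 2 = n%:Z by lia.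
have e9 : (n.+1)%:Z - 1 = n%:Z by lia.
rewrite e1 e2 e3 e8 e9 e4 /= !p_cN; ring.
Qed.
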